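(* Let $(M,\cdot)$ be a moving semigroup. Then the family of DIP subsets of $M$ is partition regular: if $X\subseteq M$ is DIP and $Y\subseteq X$, then either $Y$ or $X\setminus Y$ is DIP.
   Context: $\beta M$ is the Stone–Čech compactification of the discrete semigroup $M$ with the usual extended operation; $(M,\cdot)$ is moving if $\beta M\setminus M$ is a subsemigroup of $\beta M$. For a sequence $(x_n)$ in $M$, $\mathrm{FP}(x_n)=\{x_{i_1}\cdots x_{i_k}: k\ge1,\ i_1<\cdots<i_k\}$. A set $A\subseteq M$ is DIP if there is an injective sequence $(x_n)$ in $M$ with $\mathrm{FP}(x_n)\subseteq A$. *)

(* Defs.v *)
From Stdlib Require Import List Sorted Arith.
Import ListNotations.

Section Defs.
Variable M : Type.
Variable op : M -> M -> M.

Definition is_ultrafilter (U : (M -> Prop) -> Prop) : Prop :=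
  ~ U (fun _ => False) /\
  U (fun _ => True) /\
  (forall A B : M -> Prop, U A -> (forall x, A x -> B x) -> U B) /\
  (forall A B : M -> Prop, U A -> U B -> U (fun x => A x /\ B x)) /\
  (forall A : M -> Prop, U A \/ U (fun x => ~ A x)).

Definition principal (U : (M -> Prop) -> Prop) : Prop :=
  exists a : M, forall A : M -> Prop, U A <-> A a.

(* The usual extension of the operation to beta M:
   A in p.q  iff  {x | x^{-1}A in q} in p,  with x^{-1}A = {y | x y in A}. *)
Definition ultra_mul (p q : (M -> Prop) -> Prop) : (M -> Prop) -> Prop :=
  fun A => p (fun x => q (fun y => A (op x y))).

(* (M, op) is moving: beta M \ M is a subsemigroup of beta M, i.e. the
   product of two non-principal ultrafilters is non-principal. *)
Definition moving : Prop :=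
  forall p q, is_ultrafilter p -> is_ultrafilter q ->
    ~ principal p -> ~ principal q -> ~ principal (ultra_mul p q).

Definition fp_prod (x : nat -> M) (i0 : nat) (l : list nat) : M :=
  fold_left (fun acc i => op acc (x i)) l (x i0).

Definition FP_sub (x : nat -> M) (A : M -> Prop) : Prop :=
  forall (i0 : nat) (l : list nat), Sorted lt (i0 :: l) -> A (fp_prod x i0 l).

Definition DIP (A : M -> Prop) : Prop :=
  exists x : nat -> M, (forall m n, x m = x n -> m = n) /\ FP_sub x A.

End Defs.

(* Main.v *)
Require Import Defs.
From Stdlib Require Import List Sorted Arith Lia Classical FunctionalExtensionality PropExtensionality ClassicalEpsilon.
From mathcomp Require classical_sets.
Import ListNotations.

Lemma zornU (T:Type) (P : (T->Prop)->Prop) :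
  (forall F : (T -> Prop) -> Prop, (forall X, F X -> P X) ->
     (forall X Y, F X -> F Y -> (forall t, X t -> Y t) \/ (forall t, Y t -> X t)) ->
     P (fun a => exists X, F X /\ X a)) ->
  exists A, P A /\ forall B, (forall t, A t -> B t) -> ~(forall t, B t -> A t) -> ~P B.
Proof.
intros H.
destruct (@classical_sets.Zorn_bigcup T P) as [A [PA HA]].
- intros F HF Htot. 
  assert (E: classical_sets.bigcup F (fun X => X) = (fun a => exists X, F X /\ X a)).
  { apply functional_extensionality; intro a. apply propositional_extensionality.
    unfold classical_sets.bigcup, classical_sets.mkset. split.
    - intros [X FX Xa]; eauto.
    - intros [X [FX Xa]]; econstructor; eauto. }
  rewrite E. apply H; auto.
- exists A; split; auto. intros B H1 H2 PB. apply (HA B); auto. split; auto.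
Qed.

Section S.
Variable M : Type.
Variable op : M -> M -> M.
Hypothesis assoc : forall a b c : M, op a (op b c) = op (op a b) c.

Notation ult := (is_ultrafilter M).
Notation mul := (ultra_mul M op).

Definition fip (G : (M -> Prop) -> Prop) : Prop :=
  forall Ls, Forall G Ls -> exists z, Forall (fun A => A z) Ls.

Lemma ult_mono p A B : ult p -> p A -> (forall x, A x -> B x) -> p B.
Proof. intros [_ [_ [H _]]]; eauto. Qed.

Lemma ult_and p A B : ult p -> p A -> p B -> p (fun x => A x /\ B x).
Proof. intros [_ [_ [_ [H _]]]]; eauto. Qed.

Lemma ult_nonempty p A : ult p -> p A -> exists z, A z.
Proof. intros Hp HA. apply NNPP; intro N. pose proof Hp as [H0 _]. apply H0.
  apply (ult_mono p A); auto. intros x Ax; apply N; eauto. Qed.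

Lemma ult_not p A : ult p -> ~ p A -> p (fun x => ~ A x).
Proof. intros Hp N. destruct Hp as [_ [_ [_ [_ H]]]]. destruct (H A); tauto. Qed.

Lemma ult_not2 p A : ult p -> p A -> ~ p (fun x => ~ A x).
Proof. intros Hp HA HN. destruct (ult_nonempty p _ Hp (ult_and p _ _ Hp HA HN)) as [z [a b]]; auto. Qed.

Lemma ult_list p Ls : ult p -> Forall p Ls -> p (fun z => Forall (fun A => A z) Ls).
Proof. intros Hp. induction 1.
  - pose proof Hp as [_ [HT _]]. apply (ult_mono p _ _ Hp HT); auto.
  - apply (ult_mono p _ _ Hp (ult_and p _ _ Hp H IHForall)). intros y [a b]; auto. Qed.

Lemma ult_fip p : ult p -> fip p.
Proof. intros Hp Ls H. apply (ult_nonempty p _ Hp (ult_list p Ls Hp H)). Qed.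

Lemma ult_eq p q : ult p -> ult q -> (forall A, p A -> q A) -> p = q.
Proof. intros Hp Hq H. apply functional_extensionality; intro A.
  apply propositional_extensionality; split; auto.
  intro qA. apply NNPP; intro N. apply (ult_not2 q A Hq qA). apply H. apply ult_not; auto. Qed.

Lemma fip_add (F : (M->Prop)->Prop) X :
  (forall Ls, Forall F Ls -> exists z, Forall (fun A => A z) Ls /\ X z) ->
  fip (fun A => F A \/ A = X).
Proof.
  intros H Ls HL.
  assert (exists Ls', Forall F Ls' /\ forall z, Forall (fun A => A z) Ls' -> X z -> Forall (fun A => A z) Ls) as [Ls' [H1 H2]].
  { induction HL as [|A Ls HA HL IH].
    - exists []; auto.
    - destruct IH as [Ls' [H1 H2]]. destruct HA as [HA|HA].
      + exists (A :: Ls'). split; auto. intros z Hz Xz. inversion Hz; subst. constructor; auto.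
      + subst. exists Ls'. split; auto. }
  destruct (H Ls' H1) as [z [a b]]. eauto.
Qed.

Lemma ultrafilter_lemma (G : (M->Prop)->Prop) : fip G -> exists p, ult p /\ forall A, G A -> p A.
Proof.
  intros HG.
  destruct (zornU (M->Prop) (fun F => fip (fun A => F A \/ G A))) as [F [HF Hmax]].
  - intros C HC Htot Ls HL.
    assert ((Forall G Ls) \/ exists X, C X /\ Forall (fun A => X A \/ G A) Ls) as [H|[X [CX H]]].
    { induction HL as [|A Ls HA HL IH]; auto.
      destruct HA as [[X [CX XA]]|GA].
      - destruct IH as [IH|[Y [CY IH]]].
        + right. exists X; split; auto. constructor; auto. eapply Forall_impl; [|exact IH]. simpl; auto.
        + right. destruct (Htot X Y CX CY) as [h|h].
          * exists Y; split; auto.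
          * exists X; split; auto. constructor; auto. eapply Forall_impl; [|exact IH]. simpl.
            intros a [b|b]; auto.
      - destruct IH as [IH|[Y [CY IH]]]; auto. right; exists Y; split; auto. }
    + apply HG; auto.
    + apply (HC X CX); auto.
  - set (p := fun A => F A \/ G A).
    assert (Hadd : forall X, (forall Ls, Forall p Ls -> exists z, Forall (fun A => A z) Ls /\ X z) -> F X).
    { intros X HX. apply NNPP; intro NX.
      apply (Hmax (fun A => F A \/ A = X)).
      - auto.
      - intros h. apply NX, h; auto.
      - intros Ls HL. 
        assert (fip (fun A => p A \/ A = X)) as Hf by (apply fip_add; auto).
        apply Hf. eapply Forall_impl; [|exact HL]. unfold p. simpl. tauto. }
    assert (Hp1 : forall A Ls, p A -> Forall p Ls -> Forall p (A :: Ls)) by auto.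
    exists p. split.
    + split; [|split; [|split; [|split]]].
      * intro h. assert (Forall (fun A => F A \/ G A) [fun _ => False]) as HH by exact (Hp1 _ _ h (Forall_nil _)).
        destruct (HF _ HH) as [z Hz]. inversion Hz; auto.
      * left. apply Hadd. intros Ls HL. destruct (HF Ls HL) as [z Hz]; eauto.
      * intros A B HA HAB. left. apply Hadd. intros Ls HL.
        assert (Forall (fun A => F A \/ G A) (A :: Ls)) as HH by (constructor; auto).
        destruct (HF _ HH) as [z Hz]. inversion Hz; subst; eauto.
      * intros A B HA HB. left. apply Hadd. intros Ls HL.
        assert (Forall (fun A => F A \/ G A) (A :: B :: Ls)) as HH by (apply Hp1; auto).
        destruct (HF _ HH) as [z Hz]. inversion Hz; subst. inversion H2; subst. eauto.
      * intro A. apply NNPP; intro N.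
        assert (N1 : ~ F A) by (intro; apply N; left; left; auto).
        assert (N2 : ~ F (fun x => ~ A x)) by (intro; apply N; right; left; auto).
        apply N1. apply Hadd. intros L1 H1. apply NNPP; intro C1.
        apply N2. apply Hadd. intros L2 H2. apply NNPP; intro C2.
        assert (Forall (fun A => F A \/ G A) (L1 ++ L2)) as HH by (apply Forall_app; auto).
        destruct (HF _ HH) as [z Hz].
        apply Forall_app in Hz as [Z1 Z2].
        destruct (classic (A z)); [apply C1|apply C2]; eauto.
    + intros A GA. right; auto.
Qed.


Lemma mul_ult p q : ult p -> ult q -> ult (mul p q).
Proof.
  intros Hp Hq. unfold ultra_mul.
  pose proof Hq as [q0 [qT [qm [qa qu]]]].
  split; [|split; [|split; [|split]]].
  - intro h. apply (ult_nonempty p _ Hp) in h. destruct h; auto.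
  - pose proof Hp as [_ [pT _]]. apply (ult_mono p _ _ Hp pT); auto.
  - intros A B HA HAB. apply (ult_mono p _ _ Hp HA). intros x hx. apply (qm _ _ hx). auto.
  - intros A B HA HB. apply (ult_mono p _ _ Hp (ult_and p _ _ Hp HA HB)). intros x [a b]. auto.
  - intro A. pose proof Hp as [_ [_ [_ [_ pu]]]].
    destruct (pu (fun x => q (fun y => A (op x y)))) as [h|h]; [left; auto|right].
    apply (ult_mono p _ _ Hp h). intros x hx. apply ult_not; auto.
Qed.

Lemma mul_assoc p q r : mul (mul p q) r = mul p (mul q r).
Proof.
  unfold ultra_mul. apply functional_extensionality; intro A.
  f_equal; apply functional_extensionality; intro x.
  f_equal; apply functional_extensionality; intro y.
  f_equal; apply functional_extensionality; intro z.
  rewrite assoc; reflexivity.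
Qed.

Definition closed (K : ((M -> Prop) -> Prop) -> Prop) : Prop :=
  forall r, ult r -> (forall A, (forall q, K q -> q A) -> r A) -> K r.
Definition semi (K : ((M -> Prop) -> Prop) -> Prop) : Prop :=
  forall p q, K p -> K q -> K (mul p q).

Lemma image_closed K p : (forall q, K q -> ult q) -> closed K -> ult p ->
  closed (fun r => exists q, K q /\ r = mul q p).
Proof.
  intros HK Kc Hp r Hr HR.
  set (G := fun A : M -> Prop => (forall q, K q -> q A) \/ exists B, r B /\ A = (fun x => p (fun y => B (op x y)))).
  assert (fip G) as HG.
  { intros Ls HL.
    assert (exists D B, (forall q, K q -> q D) /\ r B /\ forall z, D z -> p (fun y => B (op z y)) -> Forall (fun A => A z) Ls) as [D [B [HD [HB Hz]]]].
    { induction HL as [|A Ls HA HL IH].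
      - exists (fun _ => True), (fun _ => True). split; [|split].
        + intros q Kq. destruct (HK q Kq) as [_ [h _]]; auto.
        + destruct Hr as [_ [h _]]; auto.
        + auto.
      - destruct IH as [D [B [HD [HB Hz]]]]. destruct HA as [HA|[B0 [HB0 ->]]].
        + exists (fun x => D x /\ A x), B. split; [|split].
          * intros q Kq. exact (ult_and q D A (HK q Kq) (HD q Kq) (HA q Kq)).
          * exact HB.
          * intros z [a b] c. constructor; auto.
        + exists D, (fun x => B x /\ B0 x). split; [|split].
          * exact HD.
          * exact (ult_and r B B0 Hr HB HB0).
          * intros z a c. constructor.
            -- apply (ult_mono p _ _ Hp c). intros y [_ h]; auto.
            -- apply Hz; auto. apply (ult_mono p _ _ Hp c). intros y [h _]; auto. }
    apply NNPP; intro N.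
    assert (forall z, ~ (D z /\ p (fun y => B (op z y)))) as N2.
    { intros z [a b]. apply N. eauto. }
    apply (ult_not2 r B Hr HB). apply HR. intros s [q [Kq ->]].
    unfold ultra_mul. apply (ult_mono q _ _ (HK q Kq) (HD q Kq)).
    intros x Dx. apply ult_not; auto. intro h; apply (N2 x); auto. }
  destruct (ultrafilter_lemma G HG) as [q [Hq HqG]].
  exists q. split.
  - apply Kc; auto. intros A h. apply HqG. left; auto.
  - apply ult_eq; auto. apply mul_ult; auto. intros B HB. apply HqG. right. eauto.
Qed.

Lemma stab_closed K p : (forall q, K q -> ult q) -> closed K -> ult p ->
  closed (fun q => K q /\ mul q p = p).
Proof.
  intros HK Kc Hp r Hr HR. split.
  - apply Kc; auto. intros A h. apply HR. intros q [Kq _]. exact (h q Kq).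
  - symmetry. apply ult_eq; auto. apply mul_ult; auto.
    intros B HB. unfold ultra_mul. apply HR. intros q [Kq E].
    rewrite <- E in HB. exact HB.
Qed.


Lemma ellis (T0 : ((M -> Prop) -> Prop) -> Prop) :
  (forall q, T0 q -> ult q) -> closed T0 -> semi T0 -> (exists q, T0 q) ->
  exists e, T0 e /\ mul e e = e.
Proof.
  intros HT Tc Ts [q0 Tq0].
  set (KK := fun (D : ((M -> Prop) -> Prop) -> Prop) p => ~ D p /\ T0 p).
  destruct (zornU ((M -> Prop) -> Prop) (fun D => closed (KK D) /\ semi (KK D) /\ exists q, KK D q))
    as [D [[Dc [Ds [p Dp]]] Hmax]].
  - intros F HF Htot.
    set (U := fun a => exists X, F X /\ X a).
    split; [|split].
    + intros r Hr HR. split.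
      * intros [X [FX Xr]]. destruct (HF X FX) as [Xc _].
        assert (KK X r) as [h _]; [|auto].
        apply Xc; auto. intros A h. apply HR. intros q [nU Tq]. apply h. split; auto.
        intro; apply nU; exists X; auto.
      * apply Tc; auto. intros A h. apply HR. intros q [_ Tq]. exact (h q Tq).
    + intros a b [na Ta] [nb Tb]. split; [|apply Ts; auto].
      intros [X [FX Xab]]. destruct (HF X FX) as [_ [Xs _]].
      assert (KK X (mul a b)) as [h _]; [|auto].
      apply Xs; split; auto; intro; [apply na|apply nb]; exists X; auto.
    + destruct (classic (exists X, F X)) as [[X0 FX0]|NF].
      2:{ exists q0. split; auto. intros [X [FX _]]. apply NF; eauto. }
      set (G := fun A : M -> Prop => exists X, F X /\ forall q, KK X q -> q A).
      assert (fip G) as HG.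
      { intros Ls HL.
        assert (exists X, F X /\ Forall (fun A => forall q, KK X q -> q A) Ls) as [X [FX HX]].
        { induction HL as [|A Ls HA HL IH].
          - exists X0; auto.
          - destruct IH as [X [FX HX]]. destruct HA as [Y [FY HY]].
            destruct (Htot X Y FX FY) as [h|h].
            + exists Y. split; auto. constructor; auto.
              eapply Forall_impl; [|exact HX]. intros B hB q [nq Tq]. apply hB. split; auto.
            + exists X. split; auto. constructor; auto.
              intros q [nq Tq]. apply HY. split; auto. }
        destruct (HF X FX) as [_ [_ [q [nq Tq]]]].
        apply (ult_fip q (HT q Tq)). eapply Forall_impl; [|exact HX]. intros B hB; apply hB; split; auto. }
      destruct (ultrafilter_lemma G HG) as [p [Hp HpG]].
      exists p. split.
      * intros [X [FX Xp]]. destruct (HF X FX) as [Xc _].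
        assert (KK X p) as [h _]; [|auto].
        apply Xc; auto. intros A h. apply HpG. exists X; auto.
      * apply Tc; auto. intros A h. apply HpG. exists X0. split; auto. intros q [_ Tq]. exact (h q Tq).
  - set (K := KK D) in *.
    assert (HK : forall q, K q -> ult q) by (intros q [_ Tq]; auto).
    assert (Hmin : forall L : ((M -> Prop) -> Prop) -> Prop, (forall q, L q -> K q) -> closed L -> semi L -> (exists q, L q) ->
               forall q, K q -> L q).
    { intros L LK Lc Ls [l Ll] q Kq.
      assert (KL : forall s, KK (fun s => ~ L s) s <-> L s).
      { intro s. unfold KK. split.
        - intros [h _]. apply NNPP; auto.
        - intro Ls0. split; [auto|]. destruct (LK s Ls0); auto. }
      apply NNPP; intro NL.
      apply (Hmax (fun s => ~ L s)).
      - intros s Ds0 Ls0. destruct (LK s Ls0); auto.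
      - intro h. destruct Kq as [nDq _]. apply nDq, h; auto.
      - split; [|split].
        + intros r Hr HR. apply KL. apply Lc; auto. intros A h. apply HR. intros s Hs. apply h, KL; auto.
        + intros a b Ha Hb. apply KL. apply Ls; apply KL; auto.
        + exists l. apply KL; auto. }
    assert (Hp : ult p) by auto.
    assert (L1 : exists q, K q /\ p = mul q p).
    { apply (Hmin (fun r => exists q, K q /\ r = mul q p)).
      - intros r [q [Kq ->]]. apply Ds; auto.
      - apply image_closed; auto.
      - intros a b [q1 [K1 ->]] [q2 [K2 ->]]. exists (mul (mul q1 p) q2). split.
        + apply Ds; [apply Ds; [exact K1|exact Dp]|exact K2].
        + rewrite !mul_assoc. reflexivity.
      - exists (mul p p). eauto.
      - exact Dp. }
    destruct L1 as [q [Kq Eq]].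
    assert (L2 : K p /\ mul p p = p).
    { apply (Hmin (fun r => K r /\ mul r p = p)).
      - intros r [a _]; auto.
      - apply stab_closed; auto.
      - intros a b [Ka Ea] [Kb Eb]. split. apply Ds; auto. rewrite mul_assoc, Eb; auto.
      - exists q. split; auto.
      - exact Dp. }
    exists p. destruct L2 as [[_ Tp] E]. auto.
Qed.


Lemma fold_op (x : nat -> M) l a b :
  fold_left (fun acc i => op acc (x i)) l (op a b) = op a (fold_left (fun acc i => op acc (x i)) l b).
Proof. revert b. induction l as [|i l IH]; intro b; simpl; auto. rewrite <- assoc. apply IH. Qed.

Lemma fp_cons x i0 i1 l : fp_prod M op x i0 (i1 :: l) = op (x i0) (fp_prod M op x i1 l).
Proof. unfold fp_prod; simpl. apply fold_op. Qed.

Lemma fp_app x i0 l1 j0 l2 :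
  fp_prod M op x i0 (l1 ++ j0 :: l2) = op (fp_prod M op x i0 l1) (fp_prod M op x j0 l2).
Proof. unfold fp_prod. rewrite fold_left_app. simpl. apply fold_op. Qed.

Section GG.
Variable p : (M -> Prop) -> Prop.
Hypothesis Hp : ult p.
Hypothesis Hnp : forall a, p (fun z => z <> a).
Hypothesis Hid : mul p p = p.

Definition star (B : M -> Prop) := fun x => B x /\ p (fun y => B (op x y)).

Lemma star_in B : p B -> p (star B).
Proof. intro HB. unfold star. apply (ult_and p B _ Hp HB). rewrite <- Hid in HB. exact HB. Qed.

Lemma star_star B x : star B x -> p (fun y => star B (op x y)).
Proof.
  intros [Bx HB]. pose proof HB as HB2. rewrite <- Hid in HB2. unfold ultra_mul in HB2.
  apply (ult_mono p _ _ Hp (ult_and p _ _ Hp HB HB2)).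
  intros y [a b]. split; auto. apply (ult_mono p _ _ Hp b). intros w h. rewrite <- assoc; auto.
Qed.

Lemma avoid_p B L : p B -> p (fun y => B y /\ ~ In y L).
Proof.
  intro HB. induction L as [|a L IH].
  - apply (ult_mono p _ _ Hp HB). simpl; auto.
  - apply (ult_mono p _ _ Hp (ult_and p _ _ Hp IH (Hnp a))). intros y [[b c] d]. split; auto.
    intros [e|e]; auto.
Qed.

Lemma gg (A : M -> Prop) : p A -> DIP M op A.
Proof.
  intro HA.
  destruct (ult_nonempty p A Hp HA) as [a0 _].
  set (pick := fun (B : M -> Prop) (L : list M) =>
          ClassicalEpsilon.epsilon (inhabits a0) (fun y => B y /\ ~ In y L)).
  assert (pick_spec : forall B L, p B -> B (pick B L) /\ ~ In (pick B L) L).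
  { intros B L HB. apply ClassicalEpsilon.epsilon_spec.
    apply (ult_nonempty p _ Hp (avoid_p B L HB)). }
  set (st := fix st (n : nat) : (M -> Prop) * list M :=
         match n with
         | O => (star A, nil)
         | S n => let s := st n in let y := pick (fst s) (snd s) in
                  (star (fun z => fst s z /\ fst s (op y z)), y :: snd s)
         end).
  set (xs := fun n => pick (fst (st n)) (snd (st n))).
  assert (Inv : forall n, p (fst (st n)) /\ forall y, fst (st n) y -> p (fun z => fst (st n) (op y z))).
  { induction n as [|n [IH1 IH2]].
    - simpl. split. apply star_in; auto. apply star_star.
    - change (fst (st (S n))) with (star (fun z => fst (st n) z /\ fst (st n) (op (xs n) z))).
      split; [|apply star_star]. apply star_in. apply ult_and; auto.
      apply IH2. apply pick_spec; auto. }
  assert (Xin : forall n, fst (st n) (xs n)) by (intro n; apply pick_spec, Inv).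
  assert (Xnot : forall n, ~ In (xs n) (snd (st n))) by (intro n; apply pick_spec, Inv).
  assert (Dec1 : forall n z, fst (st (S n)) z -> fst (st n) z /\ fst (st n) (op (xs n) z)).
  { intros n z h. exact (proj1 h). }
  assert (Dec : forall m n z, m <= n -> fst (st n) z -> fst (st m) z).
  { intros m n z h. induction h; auto. intro H. apply IHh. apply (Dec1 m0 z H). }
  assert (InL : forall k n, k < n -> In (xs k) (snd (st n))).
  { intros k n. induction n as [|n IH]; intro h; [lia|].
    change (snd (st (S n))) with (xs n :: snd (st n)).
    destruct (Nat.eq_dec k n) as [->|ne]; [left; auto|right; apply IH; lia]. }
  assert (Main : forall l i0, Sorted lt (i0 :: l) -> fst (st i0) (fp_prod M op xs i0 l)).
  { induction l as [|i1 l IH]; intros i0 HS.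
    - apply Xin.
    - apply Sorted_inv in HS as [HS HR]. inversion HR; subst.
      rewrite fp_cons. apply (Dec1 i0). apply (Dec (S i0) i1); auto. }
  exists xs. split.
  - intros m n E. destruct (Nat.lt_trichotomy m n) as [h|[h|h]]; auto.
    + exfalso. apply (Xnot n). rewrite <- E. apply InL; auto.
    + exfalso. apply (Xnot m). rewrite E. apply InL; auto.
  - intros i0 l HS. apply Main in HS. apply (Dec 0 i0) in HS; [|lia]. exact (proj1 HS).
Qed.

End GG.


Definition tail (x : nat -> M) m := fun z => exists i0 l, m <= i0 /\ Sorted lt (i0 :: l) /\ z = fp_prod M op x i0 l.

Lemma sorted_app i0 l1 j0 l2 : Sorted lt (i0 :: l1) -> (forall k, In k (i0 :: l1) -> k < j0) ->
  Sorted lt (j0 :: l2) -> Sorted lt (i0 :: l1 ++ j0 :: l2).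
Proof.
  revert i0. induction l1 as [|i1 l1 IH]; intros i0 H1 H2 H3; simpl.
  - constructor; auto. constructor. apply H2; simpl; auto.
  - apply Sorted_inv in H1 as [H1 HR]. inversion HR; subst. constructor.
    + apply IH; auto. intros k hk. apply H2. right; auto.
    + constructor; auto.
Qed.

Lemma sum_bound k L : In k L -> k <= fold_right plus 0 L.
Proof. induction L as [|a L IH]; simpl; [tauto|]. intros [->|h]; [lia|]. specialize (IH h); lia. Qed.

Lemma tail_mul x m u : tail x m u -> exists N, forall v, tail x N v -> tail x m (op u v).
Proof.
  intros [i0 [l [h1 [h2 ->]]]]. exists (S (fold_right plus 0 (i0 :: l))).
  intros v [j0 [l2 [g1 [g2 ->]]]]. exists i0, (l ++ j0 :: l2). split; auto. split.
  - apply sorted_app; auto. intros k hk. apply sum_bound in hk. lia.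
  - rewrite fp_app; auto.
Qed.

Lemma avoid_seq (x : nat -> M) : (forall m n, x m = x n -> m = n) ->
  forall L m, exists n, m <= n /\ ~ In (x n) L.
Proof.
  intros inj L. induction L as [|a L IH]; intro m.
  - exists m; split; auto.
  - destruct (IH m) as [n [h1 h2]]. destruct (classic (a = x n)) as [e|ne].
    + destruct (IH (S n)) as [n' [g1 g2]]. exists n'. split; [lia|].
      intros [e'|e']; auto. rewrite e in e'. apply inj in e'. lia.
    + exists n. split; auto. intros [e|e]; auto.
Qed.

End S.

Theorem mainTheorem3 (M : Type) (op : M -> M -> M)
  (assoc : forall a b c : M, op a (op b c) = op (op a b) c)
  (Hmov : moving M op)
  (X Y : M -> Prop) :
  DIP M op X -> (forall y, Y y -> X y) ->
  DIP M op Y \/ DIP M op (fun z => X z /\ ~ Y z).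
Proof.
  intros [x [inj HX]] HYX.
  set (T0 := fun p => is_ultrafilter M p /\ (forall a, p (fun z => z <> a)) /\ forall m, p (tail M op x m)).
  assert (np : forall p, is_ultrafilter M p -> (forall a, p (fun z => z <> a)) -> ~ principal M p).
  { intros p Hp H [a Ha]. apply (proj1 (Ha _) (H a)); auto. }
  assert (pn : forall p, is_ultrafilter M p -> ~ principal M p -> forall a, p (fun z => z <> a)).
  { intros p Hp H a. apply NNPP; intro N. apply H. exists a. intro A. split.
    - intro HA. apply ult_not in N; auto.
      destruct (ult_nonempty M p _ Hp (ult_and M p _ _ Hp HA N)) as [z [Az Nz]].
      apply NNPP; intro; apply Nz; intro; subst; auto.
    - intro Aa. apply ult_not in N; auto. apply (ult_mono M p _ _ Hp N).
      intros z Nz. apply NNPP; intro; apply Nz; intro; subst; auto. }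
  destruct (ellis M op assoc T0) as [e [[He [Hne Hte]] Ee]].
  - intros q [h _]; auto.
  - intros r Hr HR. split; [auto|split].
    + intros a. apply HR. intros q [_ [h _]]. apply h.
    + intros m. apply HR. intros q [_ [_ h]]. apply h.
  - intros p q [Hp [Np Tp]] [Hq [Nq Tq]]. split; [|split].
    + apply mul_ult; auto.
    + apply pn. apply mul_ult; auto. apply Hmov; auto.
    + intro m. unfold ultra_mul. apply (ult_mono M p _ _ Hp (Tp m)).
      intros u hu. destruct (tail_mul M op assoc x m u hu) as [N HN].
      apply (ult_mono M q _ _ Hq (Tq N)). auto.
  - set (G := fun A : M -> Prop => (exists a, A = (fun z => z <> a)) \/ exists m, A = tail M op x m).
    assert (fip M G) as HG.
    { intros Ls HL.
      assert (exists L m, forall z, tail M op x m z -> ~ In z L -> Forall (fun A => A z) Ls) as [L [m H]].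
      { induction HL as [|A Ls HA HL IH].
        - exists nil, 0; auto.
        - destruct IH as [L [m H]]. destruct HA as [[a ->]|[m' ->]].
          + exists (a :: L), m. intros z hz hn. constructor.
            * intro; apply hn; left; auto.
            * apply H; auto. intro; apply hn; right; auto.
          + exists L, (Nat.max m m'). intros z hz hn.
            assert (forall k, Nat.max m m' <= k -> m <= k /\ m' <= k) as hk by lia.
            destruct hz as [i0 [l [g1 [g2 g3]]]]. destruct (hk _ g1).
            constructor.
            * exists i0, l; auto.
            * apply H; auto. exists i0, l; auto. }
      destruct (avoid_seq M x inj L m) as [n [h1 h2]]. exists (x n). apply H; auto.
      exists n, nil. split; auto. }
    destruct (ultrafilter_lemma M G HG) as [p [Hp HpG]]. exists p. split; [auto|split].
    + intro a. apply HpG. left; eauto.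
    + intro m. apply HpG. right; eauto.
  - assert (eX : e X).
    { apply (ult_mono M e _ _ He (Hte 0)). intros z [i0 [l [_ [h ->]]]]. apply HX; auto. }
    destruct (classic (e Y)) as [eY|eY].
    + left. apply (gg M op assoc e He Hne Ee); auto.
    + right. apply (gg M op assoc e He Hne Ee). apply ult_not in eY; auto.
      apply ult_and; auto.
Qed.
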